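(* With $g_n$, $C_t$, $D_t$ as in the context, for every $t\ge1$: \[g_{2t+1}(t)=\frac12+\frac{D_t}{2C_t},\qquad g_{2t}(t)=1-\frac{D_t}{C_t},\qquad g_{2t}(t-1)=\frac{2D_t}{C_t},\] and in particular $g_{2t}(t-1)+g_{2t}(t)=1+D_t/C_t$.
   Context: Let $\mathcal X=\{A,B,C,D\}$ and let $(X_i)_{i\ge1}$ be the first-order Markov chain on $\mathcal X$ with $\mathbb P(X_1=x)=1/4$ for all $x$ and transitions: from $A$ to $A$ or $C$ w.p. $1/2$ each; from $B$ to $B$ or $D$ w.p. $1/2$ each; from $C$ and from $D$ to each of $A,B,C,D$ w.p. $1/4$. A nonempty string is admissible if all consecutive transitions have positive probability; $\mathcal A$ is the set of admissible nonempty strings; $K(u):=-\log_2\mathbb P(X_1^m=u)$ for $u=x_1^m\in\mathcal A$. Shortlex source code $C$: order nonempty binary strings by length then lexicographically as $b_1,b_2,\dots$; order $\mathcal A$ as $u_1,u_2,\dots$ by increasing $K$, then increasing length, then lexicographically with $A<B<C<D$; set $C(u_j):=b_j$. Let $K_n:=K(X_1^n)$, $L_n:=|C(X_1^n)|$, $I_n:=\mathbf 1\{L_n=K_n-1\}$, $X:=\#\{i\in\{1,\dots,n-1\}:X_i\in\{C,D\}\}$, and $g_n(x):=\mathbb P(I_n=1\mid X=x)$. For integers $m,j$ let $U(m,j):=\binom{m-j}{j}2^j$ if $0\le j$, $2j\le m$, else $0$; $C_t:=\binom{2t}{t}2^t$; $D_t:=\sum_{j=0}^{t-1}U(3t,j)-\sum_{j\ge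 t+1}U(3t,j)$. *)

(* Defs.v *)
From HB Require Import structures.
From mathcomp Require Import all_boot all_order all_algebra.
From mathcomp Require Import reals exp.
Set Implicit Arguments. Unset Strict Implicit. Unset Printing Implicit Defensive.
Import Order.TTheory GRing.Theory Num.Theory.

(* Alphabet {A,B,C,D} encoded as 'I_4 with A=0 < B=1 < C=2 < D=3,
   so the nat order on 'I_4 is the alphabetical order A<B<C<D. *)
Definition lA : 'I_4 := inord 0.
Definition lB : 'I_4 := inord 1.
Definition lC : 'I_4 := inord 2.
Definition lD : 'I_4 := inord 3.

Section Chain.
Variable R : realType.
Local Open Scope ring_scope.

Definition trans (a b : 'I_4) : R :=
  if a == lA then (if (b == lA) || (b == lC) then 2^-1 else 0)
  else if a == lB then (if (b == lB) || (b == lD) then 2^-1 else 0)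
  else 4^-1.

Fixpoint path_prob (a : 'I_4) (s : seq 'I_4) : R :=
  if s is b :: s' then trans a b * path_prob b s' else 1.

(* P(X_1^m = u) for u nonempty; the empty string gets 0 (it is excluded). *)
Definition prob (u : seq 'I_4) : R :=
  if u is a :: s then 4^-1 * path_prob a s else 0.

(* admissible = nonempty with all consecutive transitions of positive
   probability, i.e. positive probability *)
Definition admissible (u : seq 'I_4) : bool := 0 < prob u.

Definition Kf (u : seq 'I_4) : R := - ln (prob u) / ln 2.

(* strict lexicographic order (used on strings of equal length) *)
Fixpoint lexlt (v u : seq 'I_4) : bool :=
  match v, u with
  | a :: v', b :: u' => ((a < b)%N) || ((a == b) && lexlt v' u')
  | _, _ => false
  end.

(* v strictly precedes u in the order of the source code:
   increasing K, then increasing length, then lexicographic *)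
Definition prec (v u : seq 'I_4) : bool :=
  (Kf v < Kf u) ||
  ((Kf v == Kf u) &&
   ((size v < size u)%N || ((size v == size u) && lexlt v u))).

Definition all_strings (m : nat) : seq (seq 'I_4) :=
  map (fun w : m.-tuple 'I_4 => val w) (enum {: m.-tuple 'I_4}).

(* rank j with u = u_j (1-based).  Every admissible v preceding u has
   |v| + 1 <= K(v) <= K(u) <= 2|u|, so counting over lengths
   1 .. 4|u|+4 captures all of them. *)
Definition rank (u : seq 'I_4) : nat :=
  (\sum_(m < 4 * size u + 4)
     count (fun v => admissible v && prec v u) (all_strings m.+1)).+1.

(* length of b_j, the j-th nonempty binary string in shortlex order:
   b_j has length l iff 2^l - 1 <= j <= 2^(l+1) - 2, i.e. l = floor(log2(j+1)) *)
Definition bin_len (j : nat) : nat := trunc_log 2 j.+1.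

Definition codelen (u : seq 'I_4) : nat := bin_len (rank u).

Definition Ind (u : seq 'I_4) : bool := (codelen u)%:R == Kf u - 1.

Definition Xcnt (n : nat) (u : seq 'I_4) : nat :=
  count (fun a => (a == lC) || (a == lD)) (take n.-1 u).

(* g_n(x) = P(I_n = 1 | X = x) *)
Definition g (n x : nat) : R :=
  (\sum_(w : n.-tuple 'I_4 | (Xcnt n w == x) && Ind w) prob w) /
  (\sum_(w : n.-tuple 'I_4 | Xcnt n w == x) prob w).

End Chain.

Definition U (m j : nat) : nat :=
  if (2 * j <= m)%N then 'C(m - j, j) * 2 ^ j else 0.

Definition Ct (t : nat) : nat := 'C(2 * t, t) * 2 ^ t.

(* D_t = sum_{j=0}^{t-1} U(3t,j) - sum_{j>=t+1} U(3t,j); U(3t,j)=0 for j>3t *)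
Definition Dt (t : nat) : int :=
  (\sum_(0 <= j < t) (U (3 * t) j)%:Z - \sum_(t.+1 <= j < (3 * t).+1) (U (3 * t) j)%:Z)%R.

(* Main.v *)
Require Import Defs.
From HB Require Import structures.
From mathcomp Require Import all_boot all_order all_algebra.
From mathcomp Require Import reals exp.
From mathcomp Require Import zify ring lra.
Import Order.TTheory GRing.Theory Num.Theory.

Definition okT (a b : 'I_4) : bool :=
  if a == lA then (b == lA) || (b == lC)
  else if a == lB then (b == lB) || (b == lD) else true.
Definition isCD (a : 'I_4) : bool := (a == lC) || (a == lD).

Lemma I4cases (a : 'I_4) : [\/ a = lA, a = lB, a = lC | a = lD].
Proof.
case: a => [[|[|[|[|m]]]] h].
- by constructor 1; apply/val_inj; rewrite /= inordK.
- by constructor 2; apply/val_inj; rewrite /= inordK.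
- by constructor 3; apply/val_inj; rewrite /= inordK.
- by constructor 4; apply/val_inj; rewrite /= inordK.
- by [].
Qed.

Lemma nAB : (lA == lB) = false. Proof. by apply/eqP => h; have := congr1 val h; rewrite /= !inordK. Qed.
Lemma nAC : (lA == lC) = false. Proof. by apply/eqP => h; have := congr1 val h; rewrite /= !inordK. Qed.
Lemma nAD : (lA == lD) = false. Proof. by apply/eqP => h; have := congr1 val h; rewrite /= !inordK. Qed.
Lemma nBA : (lB == lA) = false. Proof. by apply/eqP => h; have := congr1 val h; rewrite /= !inordK. Qed.
Lemma nBC : (lB == lC) = false. Proof. by apply/eqP => h; have := congr1 val h; rewrite /= !inordK. Qed.
Lemma nBD : (lB == lD) = false. Proof. by apply/eqP => h; have := congr1 val h; rewrite /= !inordK. Qed.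
Lemma nCA : (lC == lA) = false. Proof. by apply/eqP => h; have := congr1 val h; rewrite /= !inordK. Qed.
Lemma nCB : (lC == lB) = false. Proof. by apply/eqP => h; have := congr1 val h; rewrite /= !inordK. Qed.
Lemma nCD : (lC == lD) = false. Proof. by apply/eqP => h; have := congr1 val h; rewrite /= !inordK. Qed.
Lemma nDA : (lD == lA) = false. Proof. by apply/eqP => h; have := congr1 val h; rewrite /= !inordK. Qed.
Lemma nDB : (lD == lB) = false. Proof. by apply/eqP => h; have := congr1 val h; rewrite /= !inordK. Qed.
Lemma nDC : (lD == lC) = false. Proof. by apply/eqP => h; have := congr1 val h; rewrite /= !inordK. Qed.

Ltac evI4 := rewrite ?eqxx ?nAB ?nAC ?nAD ?nBA ?nBC ?nBD ?nCA ?nCB ?nCD ?nDA ?nDB ?nDC /=.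

Section Probs.
Variable R : realType.
Local Open Scope ring_scope.

Lemma quarter : (4^-1 : R) = (2^-1) ^+ 2.
Proof. by rewrite exprVn expr2 -natrM. Qed.

Lemma trans_val a b :
  trans R a b = if okT a b then (2^-1 : R) ^+ (1 + isCD a) else 0.
Proof.
rewrite /trans /okT /isCD.
by case: (I4cases a) => ->; case: (I4cases b) => ->; evI4; rewrite ?quarter.
Qed.

Lemma path_prob_val a s :
  path_prob R a s = if path okT a s then (2^-1 : R) ^+ (size s + count isCD (belast a s)) else 0.
Proof.
elim: s a => [|b s IH] a /=; first by rewrite expr0.
rewrite trans_val IH; case: (okT a b) => /=; last by rewrite mul0r.
case: (path okT b s) => /=; last by rewrite mulr0.
by rewrite -exprD; congr (_ ^+ _); lia.
Qed.

Definition padm (u : seq 'I_4) : bool := if u is a :: s then path okT a s else false.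
Definition Kn (u : seq 'I_4) : nat := (size u + 1 + Xcnt (size u) u)%N.

Lemma belast_take (a : 'I_4) s : belast a s = take (size s) (a :: s).
Proof. by elim: s a => [|b s IH] a //=; rewrite IH. Qed.

Lemma Xcnt_cons a s : Xcnt (size (a :: s)) (a :: s) = count isCD (belast a s).
Proof. by rewrite /Xcnt belast_take. Qed.

Lemma prob_val u : prob R u = if padm u then (2^-1 : R) ^+ Kn u else 0.
Proof.
case: u => [|a s] //=.
rewrite path_prob_val /Kn Xcnt_cons; case: (path okT a s); last by rewrite mulr0.
by rewrite quarter -exprD; congr (_ ^+ _); rewrite /=; lia.
Qed.

Lemma half_gt0 k : 0 < (2^-1 : R) ^+ k.
Proof. by apply: exprn_gt0; rewrite invr_gt0. Qed.

Lemma admissibleE u : admissible R u = padm u.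
Proof.
by rewrite /admissible prob_val; case: (padm u); rewrite ?half_gt0 ?ltxx.
Qed.

Lemma Kf_val u : padm u -> Kf R u = (Kn u)%:R.
Proof.
move=> h; rewrite /Kf prob_val h lnXn; last by rewrite invr_gt0.
rewrite lnV; last by rewrite posrE.
have h2 : ln (2 : R) != 0 by rewrite gt_eqF // ln_gt0 // ltr1n.
rewrite mulNrn opprK -mulr_natr; field; by rewrite mul1r.
Qed.
End Probs.

Definition letters : seq 'I_4 := [:: lA; lB; lC; lD].

Fixpoint strs (m : nat) : seq (seq 'I_4) :=
  if m is m'.+1 then [seq a :: s | a <- letters, s <- strs m'] else [:: [::]].

Lemma mem_letters (a : 'I_4) : a \in letters.
Proof. by case: (I4cases a) => ->; rewrite /letters !inE eqxx ?orbT. Qed.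

Lemma uniq_letters : uniq letters.
Proof. by rewrite /letters /= !inE; evI4. Qed.

Lemma mem_map_cons (a b : 'I_4) s S : (b :: s \in map (cons a) S) = (b == a) && (s \in S).
Proof.
elim: S => [|t S IH] /=; first by rewrite in_nil andbF.
by rewrite !in_cons IH eqseq_cons andb_orr.
Qed.

Lemma nil_map_cons (a : 'I_4) S : ([::] \in map (cons a) S) = false.
Proof. by elim: S => [|t S IH] //=; rewrite in_cons IH. Qed.

Lemma mem_strs m s : (s \in strs m) = (size s == m).
Proof.
elim: m s => [|m IH] [|a s] /=.
- by rewrite inE.
- by rewrite inE.
- by rewrite !mem_cat !nil_map_cons.
rewrite !mem_cat !mem_map_cons in_nil IH eqSS orbF.
by case: (I4cases a) => ->; evI4; rewrite ?orbF.
Qed.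

Lemma uniq_strs m : uniq (strs m).
Proof.
elim: m => [|m IH] //.
have -> : strs m.+1 = [seq a :: s | a <- letters, s <- strs m] by [].
apply: allpairs_uniq => //; first exact: uniq_letters.
by move=> [a s] [b t] _ _ /= [-> ->].
Qed.

Lemma perm_all m : perm_eq (all_strings m) (strs m).
Proof.
apply: uniq_perm; [|exact: uniq_strs|].
  by rewrite map_inj_uniq ?enum_uniq //; apply: val_inj.
move=> s; rewrite mem_strs; apply/mapP/idP => [[w _ ->]|hs].
  by rewrite size_tuple.
by exists (Tuple hs); rewrite ?mem_enum.
Qed.

Lemma count_all m P : count P (all_strings m) = count P (strs m).
Proof. exact: (permP (perm_all m)). Qed.

Lemma count_strsS m P : count P (strs m.+1) =
  (count (fun s => P (lA :: s)) (strs m) + count (fun s => P (lB :: s)) (strs m) +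
   count (fun s => P (lC :: s)) (strs m) + count (fun s => P (lD :: s)) (strs m))%N.
Proof. by rewrite /= !count_cat !count_map addn0 !addnA. Qed.

Definition f m a x := count (fun s => path okT a s && (count isCD (belast a s) == x)) (strs m).

Lemma cnt0 (P : pred (seq 'I_4)) S : (forall s, P s = false) -> count P S = 0.
Proof. by move=> h; elim: S => //= s S ->; rewrite h. Qed.

Ltac fsimp := rewrite /f count_strsS /= /okT /isCD; evI4.

Lemma fA m x : f m.+1 lA x = (f m lA x + f m lC x)%N.
Proof. by fsimp; rewrite !count_pred0 !addn0. Qed.
Lemma fB m x : f m.+1 lB x = (f m lB x + f m lD x)%N.
Proof. by fsimp; rewrite !count_pred0 !add0n addn0. Qed.
Lemma fC m x : f m.+1 lC x.+1 = (f m lA x + f m lB x + f m lC x + f m lD x)%N.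
Proof. by fsimp. Qed.
Lemma fD m x : f m.+1 lD x.+1 = (f m lA x + f m lB x + f m lC x + f m lD x)%N.
Proof. by fsimp. Qed.
Lemma fC0 m : f m.+1 lC 0 = 0.
Proof. by fsimp; rewrite !cnt0 // => s; rewrite andbF. Qed.
Lemma fD0 m : f m.+1 lD 0 = 0.
Proof. by fsimp; rewrite !cnt0 // => s; rewrite andbF. Qed.

Definition tot m x := (f m lA x + f m lB x + f m lC x + f m lD x)%N.

Lemma tot_val m x : tot m x = (4 * (2 ^ x * 'C(m, x)))%N.
Proof.
elim: m x => [|m IH] x.
  case: x => [|x]; first by [].
  by rewrite bin0n muln0 muln0 /tot /f /=; case: x.
rewrite /tot fA fB; case: x => [|x].
  rewrite fC0 fD0 bin0.
  have := IH 0; rewrite /tot bin0 => h; lia.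
rewrite fC fD.
have h1 := IH x.+1; have h2 := IH x; rewrite /tot in h1 h2.
rewrite binS expnS; rewrite expnS in h1; nia.
Qed.

Lemma UE m j : U m j = 'C(m - j, j) * 2 ^ j.
Proof.
rewrite /U; case: leqP => // h.
rewrite bin_small ?mul0n //; lia.
Qed.

Lemma U0 m : U m 0 = 1.
Proof. by rewrite UE subn0 bin0 expn0. Qed.

Lemma US m j : U m.+2 j.+1 = U m.+1 j.+1 + 2 * U m j.
Proof.
rewrite !UE subSS.
case: (leqP j m) => h.
  rewrite subSn // binS expnS; ring.
have -> : m.+1 - j = 0 by lia.
have -> : m - j = 0 by lia.
rewrite !bin_small //; lia.
Qed.

Lemma Ubig m j : m < j -> U m j = 0.
Proof. by move=> h; rewrite /U; case: leqP => //; lia. Qed.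

Definition H N x := \sum_(0 <= j < x) U N j.
Definition J N := H N N.+1.

Lemma HS N x : H N x.+1 = H N x + U N x.
Proof. by rewrite /H big_nat_recr. Qed.

Lemma Hrec N x : H N.+2 x.+1 = H N.+1 x.+1 + 2 * H N x.
Proof.
rewrite /H !big_nat_recl // !U0 big_distrr -addnA -big_split /=.
by congr (_ + _); apply: eq_bigr => j _; rewrite US.
Qed.

Lemma HJ N x : N < x -> H N x = J N.
Proof.
move=> h; rewrite /J /H (big_cat_nat (n := N.+1)) //=.
rewrite [X in _ + X]big1_seq ?addn0 // => j /andP[_].
by rewrite mem_index_iota => /andP[hj _]; rewrite Ubig.
Qed.

Lemma Jrec N : J N.+2 = J N.+1 + 2 * J N.
Proof.
by rewrite {1}/J Hrec (HJ (N.+1) N.+3) // (HJ N N.+2).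
Qed.

Lemma J0 : J 0 = 1. Proof. by rewrite /J /H big_nat1 U0. Qed.
Lemma J1 : J 1 = 1.
Proof. by rewrite /J /H big_nat_recr // big_nat1 U0. Qed.

Lemma JJ i : J i + J i.+1 = 2 ^ i.+1.
Proof.
elim: i => [|i IH]; first by rewrite J0 J1.
rewrite Jrec expnS -IH; lia.
Qed.

Lemma Jsum N : \sum_(0 <= i < N) 4 * J i + 2 * J N + 2 = 2 ^ N.+2.
Proof.
elim: N => [|N IH]; first by rewrite big_geq // J0.
have h := JJ N; rewrite big_nat_recr //=; rewrite !expnS in IH h *; lia.
Qed.

Lemma cntX m x :
  count (fun v => padm v && (Xcnt (size v) v == x)) (strs m.+1) = (4 * U (m + x) x)%N.
Proof.
rewrite count_strsS UE.
have -> : (m + x - x = m)%N by lia.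
rewrite [('C(m, x) * _)%N]mulnC -tot_val /tot /f.
by congr (_ + _ + _ + _); apply: eq_count => s; rewrite -Xcnt_cons.
Qed.

Lemma sum_delta B z (F : nat -> nat) :
  (z < B)%N -> (\sum_(0 <= y < B) (z == y) * F y = F z)%N.
Proof.
elim: B => [|B IH] // h; rewrite big_nat_recr //=.
case: (ltnP z B) => hz.
  by rewrite IH // (ltn_eqF hz) mul0n addn0.
have -> : z = B by lia.
rewrite eqxx mul1n big1_seq ?add0n // => y; rewrite mem_index_iota => /andP[_ hy].
by rewrite eq_sym (ltn_eqF hy).
Qed.

Lemma count_split (S : seq (seq 'I_4)) (Q : pred (seq 'I_4)) (h : seq 'I_4 -> nat)
  (P : nat -> bool) B :
  (forall v, v \in S -> (h v < B)%N) ->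
  count (fun v => Q v && P (h v)) S =
  (\sum_(0 <= y < B) P y * count (fun v => Q v && (h v == y)) S)%N.
Proof.
elim: S => [|v S IH] hS /=.
  by rewrite big1 // => y _; rewrite muln0.
rewrite IH; last by move=> w hw; apply: hS; rewrite in_cons hw orbT.
rewrite [in RHS](eq_bigr (fun y => (h v == y) * (Q v && P y) + P y * count (fun v0 => Q v0 && (h v0 == y)) S)%N); last first.
  by move=> y _; case: (Q v); case: (h v == y) => //=; case: (P y).
rewrite big_split /= sum_delta ?hS ?mem_head //; by case: (Q v).
Qed.

Lemma sum_count_delta L b M :
  (\sum_(0 <= a < L) (a + b == M) = ((b <= M) && (M < L + b)))%N.
Proof.
elim: L => [|L IH].
  by rewrite big_geq //; case: (leqP b M) => h //=; rewrite ltnNge h.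
rewrite big_nat_recr //= IH.
case: (leqP b M) => h1 /=; case: (ltnP M (L + b)) => h2 /=;
  case: (eqVneq (L + b) M) => h3 /=; lia.
Qed.

Lemma sum_le_cut L M (F : nat -> nat) :
  (M < L)%N -> (\sum_(0 <= b < L) (b <= M) * F b = \sum_(0 <= b < M.+1) F b)%N.
Proof.
move=> h; rewrite (big_cat_nat (n := M.+1)) //=.
rewrite [X in (_ + X)%N]big1_seq ?addn0; last first.
  by move=> b /andP[_]; rewrite mem_index_iota => /andP[hb _]; have -> : (b <= M) = false by lia.
apply: eq_big_nat => b /andP[_ hb]; have -> : (b <= M) = true by lia.
by rewrite mul1n.
Qed.

Lemma triangle L M : (M <= L)%N ->
  (\sum_(0 <= a < L) \sum_(0 <= b < L) (a + b < M) * U (a + b) b =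
   \sum_(0 <= N < M) J N)%N.
Proof.
elim: M => [|M IH] h.
  rewrite [in RHS]big_geq // big1_seq // => a _; rewrite big1_seq // => b _; by rewrite ltn0.
rewrite big_nat_recr //= -IH; last by lia.
rewrite [X in (_ + X)%N](_ : _ = \sum_(0 <= a < L) \sum_(0 <= b < L) (a + b == M) * U M b)%N.
  rewrite -big_split /=; apply: eq_bigr => a _; rewrite -big_split /=.
  apply: eq_bigr => b _; rewrite ltnS leq_eqVlt.
  by case: (eqVneq (a + b) M) => [->|hne] /=; rewrite ?ltnn ?mul1n ?mul0n ?add0n ?addn0.
rewrite exchange_big /=.
rewrite (eq_bigr (fun b => (b <= M) * U M b)%N); last first.
  move=> b _; rewrite -big_distrl /= sum_count_delta.
  have -> : (M < L + b)%N = true by lia.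
  by rewrite andbT.
by rewrite sum_le_cut.
Qed.

Lemma lexlt_irr v : lexlt v v = false.
Proof. by elim: v => //= a v ->; rewrite ltnn andbF. Qed.

Lemma lexlt_trans u v w : lexlt u v -> lexlt v w -> lexlt u w.
Proof.
elim: u v w => [|a u IH] [|b v] [|c w] //=.
case/orP => [hab|/andP[/eqP hab huv]]; case/orP => [hbc|/andP[/eqP hbc hvw]].
- by rewrite (ltn_trans hab hbc).
- by rewrite -hbc hab.
- by rewrite hab hbc.
- by rewrite hab hbc eqxx (IH _ _ huv hvw) orbT.
Qed.

Lemma lexlt_total v w : size v = size w -> v != w -> lexlt v w || lexlt w v.
Proof.
elim: v w => [|a v IH] [|b w] //= [hs].
rewrite eqseq_cons negb_and => hne.
case: (ltngtP a b) => hab //=; first by rewrite orbT.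
have eab : a = b by apply/val_inj.
rewrite eab in hne *; rewrite eqxx /= in hne.
by rewrite eqxx /= IH.
Qed.

Lemma count_sub_in (T : eqType) (s : seq T) (a b : pred T) :
  (forall u, u \in s -> a u -> b u) -> (count a s <= count b s)%N.
Proof.
elim: s => [|w s IH] //= h.
have h' : forall u, u \in s -> a u -> b u.
  by move=> u hu; apply: h; rewrite in_cons hu orbT.
have := IH h'; case hw : (a w); last by case: (b w); lia.
by rewrite (h w (mem_head _ _) hw); lia.
Qed.

Lemma count_lt_sub (T : eqType) (s : seq T) (a b : pred T) (v : T) :
  (forall u, u \in s -> a u -> b u) -> v \in s -> b v -> ~~ a v ->
  (count a s < count b s)%N.
Proof.
elim: s => [|w s IH] hsub //= hv hb ha.
have hsub' : forall u, u \in s -> a u -> b u.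
  by move=> u hu; apply: hsub; rewrite in_cons hu orbT.
have hle : (count a s <= count b s)%N.
  exact: count_sub_in.
move: hv; rewrite in_cons => /orP[/eqP hvw|hv].
  by subst v; rewrite hb (negbTE ha) /= add0n add1n ltnS.
have := IH hsub' hv hb ha.
case hw : (a w); first by rewrite (hsub w (mem_head _ _) hw); lia.
case: (b w); lia.
Qed.

Lemma count_iota_lt Z n : count (fun i => (i < Z)%N) (iota 0 n) = minn Z n.
Proof.
elim: n => [|n IH]; first by rewrite minn0.
rewrite -addn1 iotaD count_cat IH /= addn0 add0n.
case: (ltnP n Z) => h; lia.
Qed.

Lemma rank_count (T : eqType) (s : seq T) (lt : rel T) Z :
  uniq s ->
  (forall v, lt v v = false) ->
  (forall u v w, lt u v -> lt v w -> lt u w) ->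
  (forall v w, v \in s -> w \in s -> v != w -> lt v w || lt w v) ->
  count (fun w => (count (fun v => lt v w) s < Z)%N) s = minn Z (size s).
Proof.
move=> hu hirr htr htot.
pose pos w := count (fun v => lt v w) s.
have hposlt : forall v w, v \in s -> w \in s -> lt v w -> (pos v < pos w)%N.
  move=> v w hv hw hvw; apply: (count_lt_sub _ _ _ _ v) => //.
    by move=> u _ huv; apply: htr huv hvw.
  by rewrite hirr.
have hinj : {in s &, injective pos}.
  move=> v w hv hw he; apply/eqP; apply/negPn/negP => hne.
  case/orP: (htot v w hv hw hne) => h.
    by have := hposlt v w hv hw h; rewrite he ltnn.
  by have := hposlt w v hw hv h; rewrite he ltnn.
have hrange : forall w, w \in s -> (pos w < size s)%N.
  move=> w hw; rewrite /pos -(count_predC (fun v => lt v w) s).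
  rewrite -[X in (X < _)%N]addn0 ltn_add2l -has_count.
  by apply/hasP; exists w => //=; rewrite hirr.
have hperm : perm_eq (map pos s) (iota 0 (size s)).
  apply: uniq_perm; first by rewrite map_inj_in_uniq.
    exact: iota_uniq.
  have hu1 : uniq (map pos s) by rewrite map_inj_in_uniq.
  have hsub : {subset map pos s <= iota 0 (size s)}.
    by move=> i /mapP[w hw ->]; rewrite mem_iota add0n hrange.
  have hsz : (size (iota 0 (size s)) <= size (map pos s))%N by rewrite size_iota size_map.
  by have [_ h] := uniq_min_size hu1 hsub hsz; move=> i; exact: h.
rewrite -(count_iota_lt Z (size s)) -(permP hperm) count_map.
by [].
Qed.

Lemma tail_val N0 x : (x <= N0)%N ->
  (\sum_(0 <= y < N0.+1) (x < y) * U N0 y = J N0 - H N0 x.+1)%N.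
Proof.
move=> hx.
have e : J N0 = (\sum_(0 <= y < N0.+1) (x < y) * U N0 y + \sum_(0 <= y < N0.+1) (y <= x) * U N0 y)%N.
  rewrite -big_split /=; apply: eq_bigr => y _.
  by case: (leqP y x) => h /=; rewrite ?mul0n ?mul1n ?addn0.
rewrite e sum_le_cut; last by lia.
by rewrite /H addnK.
Qed.

Lemma count_andl (T : eqType) (s : seq T) (b : bool) (Q : pred T) :
  count (fun v => b && Q v) s = (b * count Q s)%N.
Proof. by case: b => /=; rewrite ?mul1n ?mul0n //; elim: s. Qed.

Lemma count_or_disj (T : eqType) (s : seq T) (a b : pred T) :
  (forall v, v \in s -> a v -> b v -> False) ->
  count (fun v => a v || b v) s = (count a s + count b s)%N.
Proof.
elim: s => [|w s IH] //= h.
rewrite IH; last by move=> v hv; apply: h; rewrite in_cons hv orbT.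
case ha : (a w); case hb : (b w) => /=; try lia.
by case: (h w (mem_head _ _) ha hb).
Qed.

Lemma Xcnt_le m v : (Xcnt m v <= m.-1)%N.
Proof.
rewrite /Xcnt; apply: leq_trans (count_size _ _) _.
by rewrite size_take; case: ltnP => // h; lia.
Qed.

Lemma termwise n x N0 m y : (n + x = N0.+1)%N ->
  (((m.+2 + y < n + 1 + x) || ((m.+2 + y == n + 1 + x) && (m.+1 < n))) * U (m + y) y =
   (m + y < N0) * U (m + y) y + ((m + y == N0) && (x < y)) * U N0 y)%N.
Proof.
move=> hN.
case: (ltngtP (m + y) N0) => h.
- have -> : (m.+2 + y < n + 1 + x) = true by lia.
  by rewrite orTb andFb mul0n addn0.
- have -> : (m.+2 + y < n + 1 + x) = false by lia.
  have -> : (m.+2 + y == n + 1 + x) = false by lia.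
  by [].
- have -> : (m.+2 + y < n + 1 + x) = false by lia.
  have -> : (m.+2 + y == n + 1 + x) = true by lia.
  rewrite h /= mul0n add0n.
  have -> : (m.+1 < n) = (x < y) by apply/idP/idP; lia.
  by [].
Qed.

Definition pos n x (u : seq 'I_4) :=
  count (fun v => (padm v && (Xcnt n v == x)) && lexlt v u) (strs n).

Section Rank.
Variable R : realType.

Lemma prec_val u v : padm u -> padm v ->
  prec R v u = ((Kn v < Kn u) || ((Kn v == Kn u) &&
     ((size v < size u) || ((size v == size u) && lexlt v u))))%N.
Proof. by move=> hu hv; rewrite /prec !Kf_val // ltr_nat eqr_nat. Qed.

Lemma cntX' m y :
  count (fun v => padm v && (Xcnt m.+1 v == y)) (strs m.+1) = (4 * U (m + y) y)%N.
Proof.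
rewrite -cntX; apply: eq_in_count => v; rewrite mem_strs => /eqP ->; by [].
Qed.

Lemma rank_step u n x m : padm u -> size u = n -> Xcnt n u = x -> (m < 4 * n + 4)%N ->
  count (fun v => admissible R v && prec R v u) (all_strings m.+1) =
  (\sum_(0 <= y < 4 * n + 4)
      ((m.+2 + y < n + 1 + x) || ((m.+2 + y == n + 1 + x) && (m.+1 < n))) * (4 * U (m + y) y)
   + (m.+1 == n) * pos n x u)%N.
Proof.
move=> hu hn hx hm.
rewrite count_all.
rewrite (eq_in_count (a2 := fun v =>
   (padm v && ((m.+2 + Xcnt m.+1 v < n + 1 + x) || ((m.+2 + Xcnt m.+1 v == n + 1 + x) && (m.+1 < n))))
   || ((m.+1 == n) && ((padm v && (Xcnt n v == x)) && lexlt v u)))); last first.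
  move=> v; rewrite mem_strs => /eqP hv.
  rewrite admissibleE; case hp : (padm v) => /=; last by rewrite andbF.
  rewrite prec_val // /Kn hv hn hx.
  have -> : (m.+1 + 1 + Xcnt m.+1 v = m.+2 + Xcnt m.+1 v)%N by lia.
  case: (eqVneq m.+1 n) => e.
    subst n; rewrite -e ltnn /=.
    have -> : (m.+2 + Xcnt m.+1 v == m.+1 + 1 + x) = (Xcnt m.+1 v == x) by apply/eqP/eqP; lia.
    by case: (_ < _); case: (_ == x); case: (lexlt v u).
  by rewrite !andFb !orbF.
rewrite count_or_disj; last first.
  move=> v _ /andP[_ h1] /andP[/eqP e /andP[/andP[_ /eqP h2] _]].
  rewrite -e in h2 h1; rewrite h2 ltnn andbF orbF in h1; lia.
rewrite count_andl; congr (_ + _)%N.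
  rewrite (count_split _ _ (fun v => Xcnt m.+1 v)
     (fun y => (m.+2 + y < n + 1 + x) || ((m.+2 + y == n + 1 + x) && (m.+1 < n))) (4 * n + 4)).
    by apply: eq_bigr => y _; rewrite cntX'.
  by move=> v _; have := Xcnt_le m.+1 v; lia.
case: (eqVneq m.+1 n) => e; last by rewrite !mul0n.
by rewrite e.
Qed.

Lemma rank_val u n x N0 : padm u -> size u = n -> Xcnt n u = x ->
  (n + x = N0.+1)%N -> (1 <= n)%N ->
  rank R u = (1 + 4 * (\sum_(0 <= N < N0) J N) + 4 * (J N0 - H N0 x.+1) + pos n x u)%N.
Proof.
move=> hu hn hx hN hn1.
have hxn : (x <= n.-1)%N by rewrite -hx; apply: Xcnt_le.
rewrite /rank hn -(big_mkord xpredT (fun m => count (fun v => admissible R v && prec R v u) (all_strings m.+1))).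
set L := (4 * n + 4)%N.
have -> : (\sum_(0 <= m < L) count (fun v => admissible R v && prec R v u) (all_strings m.+1) =
   \sum_(0 <= m < L) (\sum_(0 <= y < L)
      ((m.+2 + y < n + 1 + x) || ((m.+2 + y == n + 1 + x) && (m.+1 < n))) * (4 * U (m + y) y)
   + (m.+1 == n) * pos n x u))%N.
  by apply: eq_big_nat => m /andP[_ hm]; apply: rank_step.
rewrite big_split /=.
have -> : (\sum_(0 <= m < L) (m.+1 == n) * pos n x u = pos n x u)%N.
  rewrite (eq_bigr (fun m => (n.-1 == m) * pos n x u)%N); last first.
    by move=> m _; congr (_ * _)%N; apply/eqP/eqP; lia.
  by rewrite sum_delta //; lia.
have e1 : forall m y,
   (((m.+2 + y < n + 1 + x) || ((m.+2 + y == n + 1 + x) && (m.+1 < n))) * (4 * U (m + y) y) =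
   4 * ((m + y < N0) * U (m + y) y) + 4 * (((m + y == N0) && (x < y)) * U N0 y))%N.
  by move=> m y; rewrite mulnCA (termwise _ _ _ _ _ hN) mulnDr.
rewrite (eq_bigr (fun m => \sum_(0 <= y < L) (4 * ((m + y < N0) * U (m + y) y) +
     4 * (((m + y == N0) && (x < y)) * U N0 y)))%N); last first.
  by move=> m _; apply: eq_bigr => y _; rewrite e1.
rewrite (eq_bigr (fun m => 4 * \sum_(0 <= y < L) ((m + y < N0) * U (m + y) y) +
     4 * \sum_(0 <= y < L) (((m + y == N0) && (x < y)) * U N0 y))%N); last first.
  by move=> m _; rewrite big_split /= -!big_distrr.
rewrite big_split /= -!big_distrr triangle; last by rewrite /L; lia.
rewrite exchange_big /=.
have -> : (\sum_(0 <= j < L) \sum_(0 <= i < L) ((i + j == N0) && (x < j)) * U N0 j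
    = J N0 - H N0 x.+1)%N.
  rewrite (eq_bigr (fun y => (y <= N0) * ((x < y) * U N0 y))%N); last first.
    move=> y _.
    rewrite (eq_bigr (fun m => (m + y == N0) * ((x < y) * U N0 y))%N); last first.
      by move=> m _; case: (x < y); case: (m + y == N0); rewrite ?andbF ?mul0n ?muln0 ?mul1n.
    rewrite -big_distrl /= sum_count_delta.
    have -> : (N0 < L + y)%N = true by rewrite /L; lia.
    by rewrite andbT.
  rewrite sum_le_cut; last by rewrite /L; lia.
  by rewrite tail_val //; lia.
by rewrite add1n.
Qed.
End Rank.

Lemma H_le_J N x : (H N x <= J N)%N.
Proof.
case: (leqP x N.+1) => h; last by rewrite HJ //; lia.
rewrite /J /H (big_cat_nat (n := x) (m := 0) (p := N.+1)) //=; lia.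
Qed.

Lemma trunc_eq r e : (0 < r)%N -> (trunc_log 2 r == e) = (2 ^ e <= r < 2 ^ e.+1)%N.
Proof.
move=> hr; apply/eqP/idP => [<-|h]; first exact: trunc_log_bounds.
exact: trunc_log_eq.
Qed.

Section G.
Variable R : realType.
Local Open Scope ring_scope.

Lemma Ind_val u n x N0 : padm u -> size u = n -> Xcnt n u = x ->
  (n + x = N0.+2)%N -> (1 <= n)%N ->
  Ind R u = (pos n x u < 2 * J N0.+1 - 4 * (J N0.+1 - H N0.+1 x.+1))%N.
Proof.
move=> hu hn hx hN hn1.
have hK : Kn u = N0.+3 by rewrite /Kn hn hx; lia.
rewrite /Ind Kf_val // hK.
have -> : ((N0.+3)%:R - 1 : R) = (N0.+2)%:R.
  by rewrite (_ : N0.+3 = N0.+2 + 1)%N ?natrD ?addrK //; lia.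
rewrite eqr_nat /codelen /bin_len (rank_val R u n x N0.+1 hu hn hx hN hn1) trunc_eq //.
have hJ1 := Jsum N0.+1. have hJ0 := Jsum N0.
have hH := H_le_J N0.+1 x.+1.
rewrite big_nat_recr //= in hJ1.
have hs : (4 * \sum_(0 <= N < N0.+1) J N = \sum_(0 <= i < N0) 4 * J i + 4 * J N0)%N.
  by rewrite big_nat_recr //= mulnDr big_distrr.
apply/idP/idP => [/andP[_ h2]|h].
  move: h2; rewrite -hJ1 hs; lia.
apply/andP; split.
  rewrite -hJ0 hs; lia.
rewrite -hJ1 hs; lia.
Qed.


Lemma sum_list (s : seq (seq 'I_4)) (P : pred (seq 'I_4)) K :
  (forall v, v \in s -> P v -> Kn v = K) ->
  \sum_(v <- s | P v) prob R v = (count (fun v => P v && padm v) s)%:R * (2^-1) ^+ K.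
Proof.
elim: s => [|v s IH] h; first by rewrite big_nil mul0r.
rewrite big_cons /= IH; last by move=> w hw; apply: h; rewrite in_cons hw orbT.
case hP : (P v) => /=; last by rewrite add0n.
rewrite prob_val (h v (mem_head _ _) hP).
case: (padm v) => /=; last by rewrite add0r add0n.
by rewrite natrD mulrDl mul1r.
Qed.

Lemma sum_tuple n (P : pred (seq 'I_4)) :
  \sum_(w : n.-tuple 'I_4 | P w) prob R w = \sum_(v <- strs n | P v) prob R v.
Proof.
rewrite -(perm_big _ (perm_all n)) /all_strings big_map big_enum_cond.
by apply: eq_bigl => w; rewrite inE.
Qed.

Lemma g_val n x N0 : (1 <= n)%N -> (n + x = N0.+2)%N -> (x < n)%N ->
  g R n x = (minn (2 * J N0.+1 - 4 * (J N0.+1 - H N0.+1 x.+1)) (4 * U N0.+1 x))%:R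
            / (4 * U N0.+1 x)%:R.
Proof.
move=> hn1 hN hxn.
set Z := (2 * J N0.+1 - 4 * (J N0.+1 - H N0.+1 x.+1))%N.
have hK : forall v, v \in strs n -> (Xcnt n v == x) -> Kn v = (n + 1 + x)%N.
  by move=> v; rewrite mem_strs => /eqP hv /eqP hX; rewrite /Kn hv hX.
rewrite /g (sum_tuple n (fun w => (Xcnt n w == x) && Ind R w)) (sum_tuple n (fun w => Xcnt n w == x)).
rewrite (sum_list _ _ (n + 1 + x)); last by move=> v hv /andP[hX _]; apply: hK.
rewrite (sum_list _ _ (n + 1 + x)); last by move=> v hv hX; apply: hK.
rewrite -mulf_div divff ?mulr1; last by rewrite gt_eqF // half_gt0.
set sS := filter (fun v => padm v && (Xcnt n v == x)) (strs n).
have hA : count (fun v => (Xcnt n v == x) && padm v) (strs n) = (4 * U N0.+1 x)%N.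
  case: n hn1 hN hK {sS} hxn => [|m] // _ hN hK hxn.
  rewrite -(_ : (m + x = N0.+1)%N); last by lia.
  by rewrite -cntX'; apply: eq_count => v; rewrite andbC.
rewrite hA; congr (_%:R / _).
have hpos : forall w, pos n x w = count (fun v => lexlt v w) sS.
  by move=> w; rewrite /pos count_filter; apply: eq_count => v; rewrite /= andbC.
have -> : count (fun v => ((Xcnt n v == x) && Ind R v) && padm v) (strs n) =
          count (fun w => (count (fun v => lexlt v w) sS < Z)%N) sS.
  rewrite count_filter; apply: eq_in_count => v hv /=.
  rewrite -hpos.
  case hp : (padm v); case hX : (Xcnt n v == x); rewrite /= ?andbF ?andbT //.
  move: hv; rewrite mem_strs => /eqP hv.
  by rewrite (Ind_val v n x N0 hp hv (eqP hX) hN hn1).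
rewrite rank_count.
- by rewrite size_filter -hA; congr minn; apply: eq_count => v; rewrite andbC.
- by rewrite filter_uniq // uniq_strs.
- exact: lexlt_irr.
- exact: lexlt_trans.
move=> v w; rewrite !mem_filter !mem_strs => /andP[_ /eqP hv] /andP[_ /eqP hw].
by apply: lexlt_total; rewrite hv hw.
Qed.

End G.
Local Open Scope ring_scope.

Lemma Posz_sum m n (F : nat -> nat) :
  ((\sum_(m <= j < n) F j)%N)%:Z = \sum_(m <= j < n) (F j)%:Z.
Proof. by rewrite (big_morph Posz PoszD (erefl (Posz 0))). Qed.

Definition d N x : int := (H N x)%:Z + (H N x.+1)%:Z - (J N)%:Z.

Lemma drec N x : d N.+2 x.+1 = d N.+1 x.+1 + 2 * d N x.
Proof.
rewrite /d Hrec Hrec Jrec !PoszD; ring.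
Qed.

Lemma dshift N x : d N x.+1 = d N x + (U N x)%:Z + (U N x.+1)%:Z.
Proof. by rewrite /d (HS N x.+1) (HS N x) !PoszD; ring. Qed.

Definition Ep s := d (3 * s + 3) s.+1.
Definition Fp s := d (3 * s + 2) s.+1.
Definition Gp s := d (3 * s + 1) s.
Definition Cp s : int := (U (3 * s + 3) s.+1)%:Z.

Lemma EFG s : Ep s = Fp s + 2 * Gp s.
Proof.
rewrite /Ep /Fp /Gp.
have -> : (3 * s + 3 = (3 * s + 1).+2)%N by lia.
have -> : (3 * s + 2 = (3 * s + 1).+1)%N by lia.
exact: drec.
Qed.

Lemma Gnext s : Gp s.+1 = Ep s + 2 * (Fp s - (U (3 * s + 2) s)%:Z - (U (3 * s + 2) s.+1)%:Z).
Proof.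
rewrite /Gp /Ep /Fp.
have -> : (3 * s.+1 + 1 = (3 * s + 2).+2)%N by lia.
rewrite drec.
have -> : ((3 * s + 2).+1 = 3 * s + 3)%N by lia.
rewrite (dshift (3 * s + 2) s); ring.
Qed.

Lemma Fnext s : Fp s.+1 = Gp s.+1 + (U (3 * s + 4) s.+1)%:Z + (U (3 * s + 4) s.+2)%:Z + 2 * Ep s.
Proof.
rewrite /Gp /Ep /Fp.
have -> : (3 * s.+1 + 2 = (3 * s + 3).+2)%N by lia.
rewrite drec.
have -> : ((3 * s + 3).+1 = 3 * s + 4)%N by lia.
have -> : (3 * s.+1 + 1 = 3 * s + 4)%N by lia.
rewrite (dshift (3 * s + 4) s.+1); ring.
Qed.

Lemma mid1 n : 'C(2 * n + 1, n) = 'C(2 * n + 1, n.+1).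
Proof. by rewrite -bin_sub; [congr binomial; lia | lia]. Qed.

Lemma mid2 n : 'C(2 * n + 2, n.+1) = (2 * 'C(2 * n + 1, n.+1))%N.
Proof.
have -> : (2 * n + 2 = (2 * n + 1).+1)%N by lia.
by rewrite binS mid1; lia.
Qed.

Lemma binS' n k : 'C(n.+1, k.+1) = ('C(n, k.+1) + 'C(n, k))%N.
Proof. exact: binS. Qed.

Lemma I2 s : (U (3 * s + 4) s.+1 + U (3 * s + 4) s.+2 = U (3 * s + 3) s.+1 + 6 * U (3 * s + 2) s)%N.
Proof.
rewrite !UE.
have -> : (3 * s + 4 - s.+1 = (2 * s + 2).+1)%N by lia.
have -> : (3 * s + 4 - s.+2 = 2 * s + 2)%N by lia.
have -> : (3 * s + 3 - s.+1 = 2 * s + 2)%N by lia.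
have -> : (3 * s + 2 - s = 2 * s + 2)%N by lia.
have e1 := binS' (2 * s + 2) s.
have e2 : 'C(2 * s + 2, s.+2) = 'C(2 * s + 2, s).
  by rewrite -bin_sub; [congr binomial; lia | lia].
rewrite e1 e2 !expnS; ring.
Qed.

Lemma I3 s : (U (3 * s.+1 + 3) s.+2 = 4 * U (3 * s + 3) s.+1 + 8 * U (3 * s + 2) s)%N.
Proof.
rewrite !UE.
have -> : (3 * s.+1 + 3 - s.+2 = 2 * s.+1 + 2)%N by lia.
have -> : (3 * s + 3 - s.+1 = 2 * s + 2)%N by lia.
have -> : (3 * s + 2 - s = 2 * s + 2)%N by lia.
rewrite mid2 -mid1.
have -> : (2 * s.+1 + 1 = (2 * s + 2).+1)%N by lia.
rewrite binS' !expnS; ring.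
Qed.

Lemma I4 s : (2 * U (3 * s + 2) s.+1 = U (3 * s + 3) s.+1)%N.
Proof.
rewrite !UE.
have -> : (3 * s + 2 - s.+1 = 2 * s + 1)%N by lia.
have -> : (3 * s + 3 - s.+1 = 2 * s + 2)%N by lia.
rewrite mid2; ring.
Qed.

Lemma I5 s : (4 * U (3 * s + 1) s = U (3 * s + 3) s.+1)%N.
Proof.
rewrite !UE.
have -> : (3 * s + 1 - s = 2 * s + 1)%N by lia.
have -> : (3 * s + 3 - s.+1 = 2 * s + 2)%N by lia.
rewrite mid2 mid1 !expnS; ring.
Qed.

Lemma EFGinv s : 2 * Fp s + 2 * Ep s = Cp s /\ 4 * Gp s + Cp s = 4 * Ep s.
Proof.
elim: s => [|s [IH1 IH2]].
  by split; rewrite /Fp /Ep /Cp /Gp /d /J /H unlock; vm_compute.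
have hG : Gp s.+1 = - Ep s - 2 * (U (3 * s + 2) s)%:Z.
  rewrite Gnext.
  have h4 := I4 s. have : (2 * U (3 * s + 2) s.+1)%:Z = Cp s by rewrite /Cp h4.
  rewrite PoszM => h. rewrite -h in IH1. lia.
have hF := Fnext s. have hE := EFG s.+1.
have h2 := I2 s. have h3 := I3 s.
have hs : (U (3 * s + 4) s.+1)%:Z + (U (3 * s + 4) s.+2)%:Z = Cp s + 6 * (U (3 * s + 2) s)%:Z.
  by rewrite -PoszD h2 PoszD PoszM.
have hC : Cp s.+1 = 4 * Cp s + 8 * (U (3 * s + 2) s)%:Z.
  by rewrite /Cp h3 PoszD !PoszM.
split; lia.
Qed.

Lemma Enext s : Ep s.+1 + Ep s = Cp s.
Proof.
have [IH1 IH2] := EFGinv s.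
have hG : Gp s.+1 = - Ep s - 2 * (U (3 * s + 2) s)%:Z.
  rewrite Gnext.
  have h4 := I4 s. have : (2 * U (3 * s + 2) s.+1)%:Z = Cp s by rewrite /Cp h4.
  rewrite PoszM => h. rewrite -h in IH1. lia.
have hF := Fnext s. have hE := EFG s.+1.
have h2 := I2 s.
have hs : (U (3 * s + 4) s.+1)%:Z + (U (3 * s + 4) s.+2)%:Z = Cp s + 6 * (U (3 * s + 2) s)%:Z.
  by rewrite -PoszD h2 PoszD PoszM.
lia.
Qed.

Lemma Cp_ge s : 2 * Cp s <= Cp s.+1.
Proof.
have h3 := I3 s.
have hC : Cp s.+1 = 4 * Cp s + 8 * (U (3 * s + 2) s)%:Z.
  by rewrite /Cp h3 PoszD !PoszM.
rewrite hC /Cp. lia.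
Qed.

Lemma Ebound s : 0 <= Ep s /\ 2 * Ep s <= Cp s.
Proof.
elim: s => [|s [IH1 IH2]].
  by split; rewrite /Ep /Cp /d /J /H unlock; vm_compute.
have h := Enext s. have h2 := Cp_ge s. lia.
Qed.

Lemma Dt_d t : Dt t = d (3 * t) t.
Proof.
rewrite /Dt /d -!Posz_sum.
have e : J (3 * t) = (H (3 * t) t.+1 + \sum_(t.+1 <= j < (3 * t).+1) U (3 * t) j)%N.
  by rewrite /J /H -big_cat_nat //; lia.
rewrite e /H. lia.
Qed.

Lemma Dt_E s : Dt s.+1 = Ep s.
Proof. by rewrite Dt_d /Ep; congr d; lia. Qed.

Lemma Ct_C s : (Ct s.+1)%:Z = Cp s.
Proof.
rewrite /Ct /Cp UE; congr Posz; congr (_ * _); congr binomial; lia.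
Qed.

Lemma Fp_val s : 2 * Fp s = Cp s - 2 * Ep s.
Proof. have [h1 _] := EFGinv s. lia. Qed.
Lemma Gp_val s : 4 * Gp s = 4 * Ep s - Cp s.
Proof. have [_ h2] := EFGinv s. lia. Qed.

Lemma Cp_gt0 s : 0 < Cp s.
Proof.
rewrite /Cp UE ltz_nat muln_gt0 expn_gt0 /= bin_gt0; lia.
Qed.

Lemma g_from_d (R : realType) n x N0 : (1 <= n)%N -> (n + x = N0.+2)%N -> (x < n)%N ->
  - (U N0.+1 x)%:Z <= d N0.+1 x <= (U N0.+1 x)%:Z ->
  g R n x = (2 * d N0.+1 x + 2 * (U N0.+1 x)%:Z)%:~R / (4 * U N0.+1 x)%:R.
Proof.
move=> hn hN hx /andP[hb1 hb2].
have hH := H_le_J N0.+1 x.+1. have hS := HS N0.+1 x.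
have hZ : (minn (2 * J N0.+1 - 4 * (J N0.+1 - H N0.+1 x.+1)) (4 * U N0.+1 x))%N%:Z
   = 2 * d N0.+1 x + 2 * (U N0.+1 x)%:Z.
  rewrite /d in hb1 hb2 *; lia.
by rewrite (g_val R n x N0 hn hN hx) -hZ.
Qed.

Lemma intr2 (R : realType) : ((2 : int)%:~R : R) = 2. Proof. by []. Qed.
Lemma intr4 (R : realType) : ((4 : int)%:~R : R) = 4. Proof. by []. Qed.

Theorem mainTheorem11 (R : realType) (t : nat) (ht : (1 <= t)%N) :
  [/\ g R (2 * t).+1 t = 2^-1 + (Dt t)%:~R / (2 * (Ct t)%:R),
      g R (2 * t) t = 1 - (Dt t)%:~R / (Ct t)%:R,
      g R (2 * t) t.-1 = 2 * (Dt t)%:~R / (Ct t)%:R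
    & g R (2 * t) t.-1 + g R (2 * t) t = 1 + (Dt t)%:~R / (Ct t)%:R].
Proof.
case: t ht => [|s] // _.
have [hE1 hE2] := Ebound s.
have hC := Cp_gt0 s.
rewrite Dt_E (_ : (Ct s.+1)%:R = ((Ct s.+1)%:Z)%:~R :> R) // Ct_C.
set e : R := (Ep s)%:~R. set c : R := (Cp s)%:~R.
have c0 : c != 0 by rewrite /c intr_eq0 gt_eqF.
have ga : g R (2 * s.+1).+1 s.+1 = 2^-1 + e / (2 * c).
  have := @g_from_d R (2 * s.+1).+1 s.+1 (3 * s + 2).
  rewrite (_ : (3 * s + 2).+1 = 3 * s + 3)%N; last by lia.
  rewrite -/(Ep s) -[(U (3 * s + 3) s.+1)%:Z]/(Cp s) => h.
  have hb : - Cp s <= Ep s <= Cp s by apply/andP; split; lia.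
  rewrite (h (ltac:(lia)) (ltac:(lia)) (ltac:(lia)) hb).
    rewrite (_ : ((4 * U (3 * s + 3) s.+1)%N%:R : R) = 4 * c); last first.
      by rewrite natrM /c /Cp.
    rewrite intrD !intrM intr2 -/e -/c. field. by rewrite c0.
have gb : g R (2 * s.+1) s.+1 = 1 - e / c.
  have := @g_from_d R (2 * s.+1) s.+1 (3 * s + 1).
  rewrite (_ : (3 * s + 1).+1 = 3 * s + 2)%N; last by lia.
  rewrite -/(Fp s).
  have hF := Fp_val s. have h4 := I4 s.
  have h4' : 2 * (U (3 * s + 2) s.+1)%:Z = Cp s by rewrite /Cp -h4 PoszM.
  move=> h.
  have hb : - (U (3 * s + 2) s.+1)%:Z <= Fp s <= (U (3 * s + 2) s.+1)%:Z by apply/andP; split; lia.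
  rewrite (h (ltac:(lia)) (ltac:(lia)) (ltac:(lia)) hb).
    rewrite natrM.
    have hu : ((U (3 * s + 2) s.+1)%:R : R) = c / 2.
      rewrite /c -h4' intrM intr2 /=; field; by [].
    have hf : ((Fp s)%:~R : R) = (c - 2 * e) / 2.
      rewrite /c /e -intr2 -!intrM -intrB -hF intrM intr2; field; by [].
    rewrite intrD !intrM intr2 hf -[((U (3 * s + 2) s.+1)%:Z)%:~R]/(((U (3 * s + 2) s.+1)%:R : R)) hu.
    field. by rewrite c0.
have gc : g R (2 * s.+1) s = 2 * e / c.
  have := @g_from_d R (2 * s.+1) s (3 * s).
  rewrite (_ : (3 * s).+1 = 3 * s + 1)%N; last by lia.
  rewrite -/(Gp s).
  have hG := Gp_val s. have h5 := I5 s.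
  have h5' : 4 * (U (3 * s + 1) s)%:Z = Cp s by rewrite /Cp -h5 PoszM.
  move=> h.
  have hb : - (U (3 * s + 1) s)%:Z <= Gp s <= (U (3 * s + 1) s)%:Z by apply/andP; split; lia.
  rewrite (h (ltac:(lia)) (ltac:(lia)) (ltac:(lia)) hb).
    rewrite natrM.
    have hu : ((U (3 * s + 1) s)%:R : R) = c / 4.
      rewrite /c -h5' intrM intr4 /=; field; by [].
    have hg : ((Gp s)%:~R : R) = (4 * e - c) / 4.
      rewrite /c /e -intr4 -!intrM -intrB -hG intrM intr4; field; by [].
    rewrite intrD !intrM intr2 hg -[((U (3 * s + 1) s)%:Z)%:~R]/(((U (3 * s + 1) s)%:R : R)) hu.
    field. by rewrite c0.
split.
- exact: ga.
- exact: gb.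
- exact: gc.
rewrite gb gc; field; exact: c0.
Qed.
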